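(* Consider a single user with $N$ movable antennas at positions $\mathbf w=[w_1,\dots,w_N]^T$, power $P>0$, aperture $W>0$, $L$ propagation paths, and channel $\mathbf G(\mathbf w)=\sqrt{MN}\,\mathbf A_{\mathrm R}\boldsymbol\Gamma\mathbf A_{\mathrm T}^H(\mathbf w)\in\mathbb C^{M\times N}$. Let $\mathcal W=\{\mathbf w\in\mathbb R^N:0\le w_n\le W\ \forall n,\ w_n\ne w_{n'}\ \forall n\ne n'\}$. Consider the problems $$\text{(A)}:\ \max_{\mathbf Q,\mathbf w}\ \log|\mathbf G(\mathbf w)\mathbf Q\mathbf G^H(\mathbf w)+\mathbf I_M|\ \text{ s.t. } \mathbf Q\in\mathbb C^{N\times N},\ \mathbf Q\succeq\mathbf 0,\ \mathrm{tr}(\mathbf Q)\le P,\ \mathbf w\in\mathcal W,$$ $$\text{(B)}:\ \max_{\mathbf F,\mathbf w}\ \log|\mathbf G^H(\mathbf w)\mathbf F\mathbf G(\mathbf w)+\mathbf I_N|\ \text{ s.t. } \mathbf F\in\mathbb C^{M\times M},\ \mathbf F\succeq\mathbf 0,\ \mathrm{tr}(\mathbf F)\le P,\ \mathbf w\in\mathcal W,$$ and, for fixed $\mathbf w$, the subproblems (A$_{\mathbf w}$): maximize the objective of (A) over $\mathbf Q\succeq\mathbf 0$, $\mathrm{tr}(\mathbf Q)\le P$; and (B$_{\mathbf w}$): maximize the objective of (B) over $\mathbf F\succeq\mathbf 0$, $\mathrm{tr}(\mathbf F)\le P$. Suppose $(\mathbf Q^*,\mathbf w^* )$ is an optimal solution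 of (A) and $(\mathbf F^\divideontimes,\mathbf w^\divideontimes)$ is an optimal solution of (B). Then: 1. $\log|\mathbf G(\mathbf w^* )\mathbf Q^*\mathbf G^H(\mathbf w^* )+\mathbf I_M|=\log|\mathbf G^H(\mathbf w^\divideontimes)\mathbf F^\divideontimes\mathbf G(\mathbf w^\divideontimes)+\mathbf I_N|$. 2. If $\mathbf F^*$ is an optimal solution of (B$_{\mathbf w^*}$), then $(\mathbf F^*,\mathbf w^* )$ is an optimal solution of (B), and $\log|\mathbf G^H(\mathbf w^* )\mathbf F^*\mathbf G(\mathbf w^* )+\mathbf I_N|=\log|\mathbf G^H(\mathbf w^\divideontimes)\mathbf F^\divideontimes\mathbf G(\mathbf w^\divideontimes)+\mathbf I_N|$. 3. If $\mathbf Q^\divideontimes$ is an optimal solution of (A$_{\mathbf w^\divideontimes}$), then $(\mathbf Q^\divideontimes,\mathbf w^\divideontimes)$ is an optimal solution of (A), and $\log|\mathbf G(\mathbf w^* )\mathbf Q^*\mathbf G^H(\mathbf w^* )+\mathbf I_M|=\log|\mathbf G(\mathbf w^\divideontimes)\mathbf Q^\divideontimes\mathbf G^H(\mathbf w^\divideontimes)+\mathbf I_M|$.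
   Context: The base station has an $M$-antenna uniform linear array with spacing $d=\lambda/2$ ($\lambda$ the wavelength). The $L$ paths have complex gains $\gamma_l$, angles of arrival $\beta_l\in[0,\pi]$ and angles of departure $\theta_l\in[0,\pi]$. $\mathbf a_{\mathrm R}(\beta)=\frac1{\sqrt M}[1,e^{-j\frac{2\pi}{\lambda}d\cos\beta},\dots,e^{-j\frac{2\pi}{\lambda}(M-1)d\cos\beta}]^T$, $\mathbf a_{\mathrm T}(\theta,\mathbf w)=\frac1{\sqrt N}[e^{-j\frac{2\pi}{\lambda}w_1\cos\theta},\dots,e^{-j\frac{2\pi}{\lambda}w_N\cos\theta}]^T$, $\mathbf A_{\mathrm R}=[\mathbf a_{\mathrm R}(\beta_l)]_{l=1}^L\in\mathbb C^{M\times L}$, $\mathbf A_{\mathrm T}(\mathbf w)=[\mathbf a_{\mathrm T}(\theta_l,\mathbf w)]_{l=1}^L\in\mathbb C^{N\times L}$, $\boldsymbol\Gamma=\mathrm{diag}(\gamma_1,\dots,\gamma_L)$. $|\cdot|$ denotes determinant. *)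

(* Defs.v *)
From HB Require Import structures.
From mathcomp Require Import all_boot all_order all_algebra.
From mathcomp Require Import complex.
From mathcomp Require Import reals exp trigo.
Set Implicit Arguments. Unset Strict Implicit. Unset Printing Implicit Defensive.
Import Order.TTheory GRing.Theory Num.Theory.
Local Open Scope ring_scope.

Section MA.
Variable R : realType.
Local Notation C := (complex R).

Definition rC (x : R) : C := Complex x 0.

Definition expj (x : R) : C := Complex (cos x) (sin x).

Definition hermT m n (A : 'M[C]_(m, n)) : 'M[C]_(n, m) := (map_mx Num.conj A)^T.

Definition psd n (A : 'M[C]_n) : Prop :=
  hermT A = A /\ forall x : 'cV[C]_n, 0 <= (hermT x *m A *m x) 0 0.

(* log of a determinant (the determinants considered are real and >= 1);
   natural logarithm of the real part of the determinant *)
Definition logdet n (A : 'M[C]_n) : R := ln (complex.Re (\det A)).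

(* Receive steering matrix A_R = [a_R(beta_l)]_l, d = lambda/2 *)
Definition A_R (M L : nat) (lam : R) (beta : 'I_L -> R) : 'M[C]_(M, L) :=
  \matrix_(m < M, l < L)
    (rC (Num.sqrt (M%:R))^-1 *
     expj (- (2 * pi / lam) * (m%:R * (lam / 2)) * cos (beta l))).

Definition A_T (N L : nat) (lam : R) (theta : 'I_L -> R) (w : 'I_N -> R)
  : 'M[C]_(N, L) :=
  \matrix_(n < N, l < L)
    (rC (Num.sqrt (N%:R))^-1 *
     expj (- (2 * pi / lam) * w n * cos (theta l))).

Definition Gam (L : nat) (gamma : 'I_L -> C) : 'M[C]_L :=
  diag_mx (\row_l gamma l).

Definition chanG (M N L : nat) (lam : R) (gamma : 'I_L -> C)
  (beta theta : 'I_L -> R) (w : 'I_N -> R) : 'M[C]_(M, N) :=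
  rC (Num.sqrt ((M * N)%:R)) *:
    (A_R M lam beta *m Gam gamma *m hermT (A_T lam theta w)).

Definition posW (N : nat) (W : R) (w : 'I_N -> R) : Prop :=
  (forall n, 0 <= w n <= W) /\ (forall n n', n != n' -> w n != w n').

Definition covFeas n (P : R) (Q : 'M[C]_n) : Prop :=
  psd Q /\ \tr Q <= rC P.

Definition objA M N (G : 'M[C]_(M, N)) (Q : 'M[C]_N) : R :=
  logdet (G *m Q *m hermT G + 1%:M).
Definition objB M N (G : 'M[C]_(M, N)) (F : 'M[C]_M) : R :=
  logdet (hermT G *m F *m G + 1%:M).

Definition optA M N (W P : R) (G : ('I_N -> R) -> 'M[C]_(M, N))
  (Q : 'M[C]_N) (w : 'I_N -> R) : Prop :=
  (covFeas P Q /\ posW W w) /\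
  forall Q' w', covFeas P Q' -> posW W w' -> objA (G w') Q' <= objA (G w) Q.

Definition optB M N (W P : R) (G : ('I_N -> R) -> 'M[C]_(M, N))
  (F : 'M[C]_M) (w : 'I_N -> R) : Prop :=
  (covFeas P F /\ posW W w) /\
  forall F' w', covFeas P F' -> posW W w' -> objB (G w') F' <= objB (G w) F.

Definition optAw M N (P : R) (G : 'M[C]_(M, N)) (Q : 'M[C]_N) : Prop :=
  covFeas P Q /\ forall Q', covFeas P Q' -> objA G Q' <= objA G Q.

Definition optBw M N (P : R) (G : 'M[C]_(M, N)) (F : 'M[C]_M) : Prop :=
  covFeas P F /\ forall F', covFeas P F' -> objB G F' <= objB G F.

End MA.

(* Main.v *)
Require Import Defs.
From HB Require Import structures.
From mathcomp Require Import all_boot all_order all_algebra.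
From mathcomp Require Import complex.
From mathcomp Require Import reals exp trigo.
From mathcomp Require Import spectral sesquilinear.
Import Order.TTheory GRing.Theory Num.Theory.
Local Open Scope ring_scope.
Set Implicit Arguments. Unset Strict Implicit.

Section Core.
Variable R : realType.
Local Notation C := (complex R).

Lemma hermT_mul m n p (A : 'M[C]_(m, n)) (B : 'M[C]_(n, p)) :
  hermT (A *m B) = hermT B *m hermT A.
Proof. by rewrite /hermT map_mxM trmx_mul. Qed.

Lemma hermTK m n (A : 'M[C]_(m, n)) : hermT (hermT A) = A.
Proof. by apply/matrixP => i j; rewrite /hermT !mxE conjCK. Qed.

Lemma hermT_diag n (d : 'rV[C]_n) :
  hermT (diag_mx d) = diag_mx (\row_i (d 0 i)^*).
Proof.
apply/matrixP => i j; rewrite /hermT !mxE eq_sym.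
by case: eqVneq => [->|_]; rewrite ?mulr1n ?mulr0n ?conjC0.
Qed.

Lemma hermT_1 n : hermT (1%:M : 'M[C]_n) = 1%:M.
Proof.
apply/matrixP => i j; rewrite /hermT !mxE eq_sym.
by case: (i == j); rewrite ?conjC1 ?conjC0.
Qed.

Lemma sylvester m n (A : 'M[C]_(m, n)) (B : 'M[C]_(n, m)) :
  \det (A *m B + 1%:M) = \det (B *m A + 1%:M).
Proof.
have e1 : block_mx (A *m B + 1%:M) (- A) 0 (1%:M : 'M_n) *m
          block_mx 1%:M 0 B 1%:M = block_mx 1%:M (- A) B 1%:M.
  rewrite mulmx_block ?mulmx1 ?mul1mx ?mulmx0 ?mul0mx ?addr0 ?add0r.
  by rewrite mulNmx addrAC addrN add0r.
have e2 : block_mx (1%:M : 'M_m) 0 B 1%:M *m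
          block_mx 1%:M (- A) 0 (B *m A + 1%:M) = block_mx 1%:M (- A) B 1%:M.
  rewrite mulmx_block ?mulmx1 ?mul1mx ?mulmx0 ?mul0mx ?addr0 ?add0r.
  by rewrite mulmxN addrA addNr add0r.
have := congr1 determinant e1; rewrite -{}e2 !det_mulmx det_ublock det_lblock.
by rewrite det_ublock !det1 !mulr1 !mul1r.
Qed.

Lemma diag_XQXH n k (X : 'M[C]_(k, n)) (Q : 'M[C]_n) i :
  psd Q -> 0 <= (X *m Q *m hermT X) i i.
Proof.
move=> [_ HQ]; have := HQ (col i (hermT X)).
suff -> : (hermT (col i (hermT X)) *m Q *m col i (hermT X)) 0 0
          = (X *m Q *m hermT X) i i by [].
have -> : hermT (col i (hermT X)) = row i X.
  apply/matrixP => a b; rewrite /hermT !mxE conjCK. by [].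
rewrite -row_mul.
by rewrite !mxE; apply: eq_bigr => j _; rewrite !mxE.
Qed.

Lemma psd_XQXH n k (X : 'M[C]_(k, n)) (Q : 'M[C]_n) :
  psd Q -> psd (X *m Q *m hermT X).
Proof.
move=> [HH HQ]; split.
  by rewrite !hermT_mul hermTK HH mulmxA.
move=> x; have := HQ (hermT X *m x).
by rewrite hermT_mul hermTK !mulmxA.
Qed.


Lemma gram_ge0 k n (X : 'M[C]_(k, n)) i : 0 <= (hermT X *m X) i i.
Proof.
rewrite mxE; apply: sumr_ge0 => j _; rewrite /hermT !mxE mulrC.
exact: mul_conjC_ge0.
Qed.

Lemma sq_inv (y : C) : y ^+ 2 * y^-1 = y.
Proof.
have [->|y0] := eqVneq y 0; first by rewrite invr0 mulr0.
by rewrite expr2 mulfK.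
Qed.

Lemma prodVU_gen n (U V : 'M[C]_n) (UV : U *m V = 1%:M) (a b : 'rV[C]_n) :
    (V *m diag_mx a *m U) *m (V *m diag_mx b *m U)
    = V *m diag_mx (\row_i (a 0 i * b 0 i)) *m U.
Proof.
rewrite -!mulmxA [U *m (V *m _)]mulmxA UV mul1mx.
by rewrite [diag_mx a *m _]mulmxA mulmx_diag !mulmxA.
Qed.

Lemma core m n (G : 'M[C]_(m, n)) (Q : 'M[C]_n) : psd Q ->
  exists F : 'M[C]_m, [/\ psd F, \tr F <= \tr Q &
    \det (hermT G *m F *m G + 1%:M) = \det (G *m Q *m hermT G + 1%:M)].
Proof.
move=> Qpsd.
move Hdef : (hermT G *m G) => H.
have Hh : hermT H = H by rewrite -Hdef hermT_mul hermTK.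
have Hn : H \is normalmx.
  by apply/normalmxP; rewrite -map_trmx -/(hermT H) Hh.
move/orthomx_spectralP: Hn.
set U := spectralmx H; set d := spectral_diag H => HE.
have Uu : U \is unitarymx := spectral_unitarymx H.
have iU : invmx U = hermT U by rewrite invmx_unitary // /hermT map_trmx.
have Uunit : U \in unitmx := spectral_unit H.
clearbody U d.
set V := hermT U.
have UV : U *m V = 1%:M by rewrite /V -iU mulmxV.
have VU : V *m U = 1%:M by rewrite /V -iU mulVmx.
rewrite iU in HE; rewrite -/V in HE.
have prodVU := prodVU_gen UV.
have dge0 : forall i, 0 <= d 0 i.
  move=> i.
  have dE : diag_mx d = hermT (G *m V) *m (G *m V).
    rewrite hermT_mul /V hermTK -!mulmxA [hermT G *m _]mulmxA Hdef HE.
    by rewrite !mulmxA UV mul1mx -mulmxA UV mulmx1.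
  have := gram_ge0 (G *m V) i; rewrite -dE mxE eqxx mulr1n.
  by [].
set s := \row_i (sqrtC (d 0 i))^-1.
set t := \row_i sqrtC (d 0 i).
set S := V *m diag_mx s *m U.
set T := V *m diag_mx t *m U.
have HS : H *m S = T.
  rewrite /S /T {1}HE prodVU; apply: (congr1 (fun x => V *m diag_mx x *m U)); apply/rowP => i.
  by rewrite !mxE -{1}(sqrtCK (d 0 i)) sq_inv.
have SH : S *m H = T.
  rewrite /S /T HE prodVU; apply: (congr1 (fun x => V *m diag_mx x *m U)); apply/rowP => i.
  by rewrite !mxE mulrC -{1}(sqrtCK (d 0 i)) sq_inv.
have TT : T *m T = H.
  rewrite /T prodVU HE; apply: (congr1 (fun x => V *m diag_mx x *m U)); apply/rowP => i.
  by rewrite !mxE -expr2 sqrtCK.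
have Sh : hermT S = S.
  rewrite /S !hermT_mul /V hermTK hermT_diag mulmxA.
  apply: (congr1 (fun x => V *m diag_mx x *m U)); apply/rowP => i.
  by rewrite !mxE geC0_conj // invr_ge0 sqrtC_ge0.
exists (G *m S *m Q *m hermT (G *m S)); split.
- exact: psd_XQXH.
- rewrite hermT_mul Sh mxtrace_mulC.
  have -> : S *m hermT G *m (G *m S *m Q) = T *m S *m Q.
    by rewrite -SH -Hdef !mulmxA.
  rewrite prodVU -mulmxA mxtrace_mulC mulmxA mul_mx_diag.
  have -> : \tr Q = \tr (U *m Q *m V).
    by rewrite mxtrace_mulC mulmxA VU mul1mx.
  rewrite /mxtrace; apply: ler_sum => i _.
  have a0 : 0 <= (U *m Q *m V) i i by exact: diag_XQXH.
  move: a0; set a := (U *m Q *m V) i i => a0.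
  rewrite mxE -/a mxE.
  rewrite /t /s !mxE.
  have [->|y0] := eqVneq (sqrtC (d 0 i)) 0; first by rewrite mul0r mulr0.
  by rewrite divff // mulr1.
- rewrite hermT_mul Sh.
  have -> : hermT G *m (G *m S *m Q *m (S *m hermT G)) *m G = T *m (Q *m T).
    by rewrite -{1}HS -SH -Hdef !mulmxA.
  rewrite sylvester -mulmxA TT -Hdef mulmxA.
  by rewrite -[G *m Q *m _]mulmxA sylvester mulmxA.
Qed.


Lemma AtoB m n (G : 'M[C]_(m, n)) (P : R) (Q : 'M[C]_n) :
  covFeas P Q -> exists F, covFeas P F /\ objB G F = objA G Q.
Proof.
move=> [Qp Qt]; have [F [Fp Ft e]] := core G Qp.
exists F; split; first by split => //; exact: le_trans Qt.
by rewrite /objB /objA /logdet e.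
Qed.

Lemma BtoA m n (G : 'M[C]_(m, n)) (P : R) (F : 'M[C]_m) :
  covFeas P F -> exists Q, covFeas P Q /\ objA G Q = objB G F.
Proof.
move=> [Fp Ft]; have [Q [Qp Qt e]] := core (hermT G) Fp.
exists Q; split; first by split => //; exact: le_trans Ft.
by move: e; rewrite /objB /objA /logdet !hermTK => ->.
Qed.

End Core.

Theorem theorem5 (R : realType) (M N L : nat) (lam W P : R)
  (gamma : 'I_L -> complex R) (beta theta : 'I_L -> R) :
  (0 < M)%N -> (0 < N)%N -> 0 < lam -> 0 < P -> 0 < W ->
  (forall l, 0 <= beta l <= pi) -> (forall l, 0 <= theta l <= pi) ->
  let G := chanG M lam gamma beta theta in
  forall (Qs : 'M[complex R]_N) (ws : 'I_N -> R)
         (Fx : 'M[complex R]_M) (wx : 'I_N -> R),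
  optA W P G Qs ws -> optB W P G Fx wx ->
  [/\ objA (G ws) Qs = objB (G wx) Fx,
      (forall Fs : 'M[complex R]_M, optBw P (G ws) Fs ->
         optB W P G Fs ws /\ objB (G ws) Fs = objB (G wx) Fx)
    & (forall Qx : 'M[complex R]_N, optAw P (G wx) Qx ->
         optA W P G Qx wx /\ objA (G ws) Qs = objA (G wx) Qx)].
Proof.
move=> _ _ _ _ _ _ _ G Qs ws Fx wx [[Qf wsf] oA] [[Ff wxf] oB].
clearbody G.
have ab : objA (G ws) Qs <= objB (G wx) Fx.
  by have [F [Fc <-]] := AtoB (G ws) Qf; apply: (oB F ws Fc wsf).
have ba : objB (G wx) Fx <= objA (G ws) Qs.
  by have [Q [Qc <-]] := BtoA (G wx) Ff; apply: (oA Q wx Qc wxf).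
have eq1 : objA (G ws) Qs = objB (G wx) Fx by apply: le_anti; apply/andP; split; [exact: ab | exact: ba].
split; first exact: eq1.
- move=> Fs [Fsf oBw].
  have le1 : objA (G ws) Qs <= objB (G ws) Fs.
    by have [F [Fc <-]] := AtoB (G ws) Qf; apply: (oBw F Fc).
  have le2 : objB (G ws) Fs <= objB (G wx) Fx by apply: (oB Fs ws Fsf wsf).
  have e : objB (G ws) Fs = objB (G wx) Fx.
    by apply: le_anti; apply/andP; split; [exact: le2 | rewrite -eq1; exact: le1].
  split; last exact: e.
  split; first by split.
  move=> F' w' F'c w'c; rewrite e; exact: (oB F' w' F'c w'c).
- move=> Qx [Qxf oAw].
  have le1 : objB (G wx) Fx <= objA (G wx) Qx.
    by have [Q [Qc <-]] := BtoA (G wx) Ff; apply: (oAw Q Qc).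
  have le2 : objA (G wx) Qx <= objA (G ws) Qs by apply: (oA Qx wx Qxf wxf).
  have e : objA (G wx) Qx = objA (G ws) Qs.
    by apply: le_anti; apply/andP; split; [exact: le2 | rewrite eq1; exact: le1].
  split; last exact: (esym e).
  split; first by split.
  move=> Q' w' Q'c w'c; rewrite e; exact: (oA Q' w' Q'c w'c).
Qed.
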